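(* Suppose $\gcd(\alpha,|\langle\Theta\rangle|)=1$, and let $\mathcal{C}$ be an $\mathbb{F}_q\mathcal{R}$-skew cyclic code of length $(\alpha,\beta)$ generated as a left $\mathcal{R}[x;\theta]$-submodule of $R_{\alpha,\beta}$ by $(f(x),0)$ and $(0,g(x))$, with $f(x)\in\mathbb{F}_q[x;\Theta]/\langle x^\alpha-1\rangle$ and $g(x)\in\mathcal{R}[x;\theta]/\langle x^\beta-1\rangle$. Then $\mathcal{C}=\mathcal{C}'\otimes\mathscr{C}$, where $\mathcal{C}'$ is a cyclic code of length $\alpha$ over $\mathbb{F}_q$ and $\mathscr{C}$ is a skew cyclic code of length $\beta$ over $\mathcal{R}$.
   Context: Let $p$ be a prime, $q=p^m$, $\mathcal{R}=\mathbb{F}_q[u]/\langle u^2-u\rangle$. Fix $i$; $\Theta(a)=a^{p^i}$ on $\mathbb{F}_q$ and $\theta(a+ub)=a^{p^i}+ub^{p^i}$ on $\mathcal{R}$; $\eta(a+ub)=a$; $|\langle\Theta\rangle|$ denotes the order of $\Theta$. $\mathbb{F}_q[x;\Theta]$, $\mathcal{R}[x;\theta]$ are skew polynomial rings with multiplication determined by $(ax^i)(bx^j)=a\Theta^i(b)x^{i+j}$ (resp. with $\theta$). $R_{\alpha,\beta}=\mathbb{F}_q[x;\Theta]/\langle x^\alpha-1\rangle\times\mathcal{R}[x;\theta]/\langle x^\beta-1\rangle$, identified with $\mathbb{F}_q^\alpha\times\mathcal{R}^\beta$ via coefficient vectors, is a left $\mathcal{R}[x;\theta]$-module via $r(x)*(k(x),t(x))=(\eta(r(x))k(x),r(x)t(x))$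 ($\eta$ coefficientwise, reduction modulo $x^\alpha-1$, $x^\beta-1$). An $\mathbb{F}_q\mathcal{R}$-skew cyclic code of length $(\alpha,\beta)$ is an $\mathcal{R}$-submodule of $\mathbb{F}_q^\alpha\times\mathcal{R}^\beta$ (with $s*(x,y)=(\eta(s)x,sy)$ componentwise) closed under $\sigma(x_0,\dots,x_{\alpha-1},y_0,\dots,y_{\beta-1})=(\Theta(x_{\alpha-1}),\Theta(x_0),\dots,\Theta(x_{\alpha-2}),\theta(y_{\beta-1}),\theta(y_0),\dots,\theta(y_{\beta-2}))$. A skew cyclic code of length $n$ over $\mathcal{R}$ is an $\mathcal{R}$-submodule of $\mathcal{R}^n$ closed under $(c_0,\dots,c_{n-1})\mapsto(\theta(c_{n-1}),\theta(c_0),\dots,\theta(c_{n-2}))$. For $A\subseteq\mathbb{F}_q^\alpha$, $B\subseteq\mathcal{R}^\beta$, $A\otimes B=\{(a,b):a\in A,b\in B\}$. *)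

(* Defs.v *)
From HB Require Import structures.
From mathcomp Require Import all_boot all_order all_algebra.
Set Implicit Arguments. Unset Strict Implicit. Unset Printing Implicit Defensive.
Import GRing.Theory.
Local Open Scope ring_scope.

(* F plays the role of F_q (a finite field of characteristic p).
   The ring R = F[u]/<u^2-u> is represented by pairs (a,b) : F * F,
   standing for a + u b.  Addition is componentwise (product zmodType),
   multiplication uses u^2 = u. *)

Section Defs.
Variable F : finFieldType.

Definition Ru := (F * F)%type.

Definition Rmul (x y : Ru) : Ru :=
  (x.1 * y.1, x.1 * y.2 + x.2 * y.1 + x.2 * y.2).

Definition Theta (p i : nat) (a : F) : F := a ^+ (p ^ i).
Definition theta (p i : nat) (x : Ru) : Ru := (Theta p i x.1, Theta p i x.2).
Definition eta (x : Ru) : F := x.1.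

Definition is_order_Theta (p i n : nat) : Prop :=
  (0 < n)%N /\ (forall a : F, iter n (Theta p i) a = a) /\
  (forall k, (0 < k < n)%N -> exists a : F, iter k (Theta p i) a != a).

(* Left action of a skew polynomial r(x) = sum_j r_j x^j in F[x;Theta]
   (coefficient list r) on k(x) in F[x;Theta]/<x^alpha - 1>, given by its
   coefficient vector: the skew product r(x)k(x), reduced modulo the left
   ideal generated by x^alpha - 1 (i.e. x^e is replaced by x^(e mod alpha)). *)
Definition skew_mulF (p i alpha : nat) (r : seq F) (k : {ffun 'I_alpha -> F})
  : {ffun 'I_alpha -> F} :=
  [ffun l : 'I_alpha => \sum_(j < size r) \sum_(l' < alpha | ((j + l') %% alpha == l)%N)
      r`_j * iter j (Theta p i) (k l')].

Definition skew_mulR (p i beta : nat) (r : seq Ru) (t : {ffun 'I_beta -> Ru})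
  : {ffun 'I_beta -> Ru} :=
  [ffun l : 'I_beta => \sum_(j < size r) \sum_(l' < beta | ((j + l') %% beta == l)%N)
      Rmul (nth 0 r j) (iter j (theta p i) (t l'))].

Definition act (p i alpha beta : nat) (r : seq Ru)
  (c : {ffun 'I_alpha -> F} * {ffun 'I_beta -> Ru}) :=
  (skew_mulF p i (map eta r) c.1, skew_mulR p i r c.2).

Definition scaleF n (a : F) (x : {ffun 'I_n -> F}) : {ffun 'I_n -> F} :=
  [ffun l => a * x l].
Definition scaleR n (s : Ru) (y : {ffun 'I_n -> Ru}) : {ffun 'I_n -> Ru} :=
  [ffun l => Rmul s (y l)].

Definition cshiftF n (x : {ffun 'I_n -> F}) : {ffun 'I_n -> F} :=
  [ffun l => x (ord_pred l)].
Definition sshiftR (p i n : nat) (y : {ffun 'I_n -> Ru}) : {ffun 'I_n -> Ru} :=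
  [ffun l => theta p i (y (ord_pred l))].
Definition sshiftF (p i n : nat) (x : {ffun 'I_n -> F}) : {ffun 'I_n -> F} :=
  [ffun l => Theta p i (x (ord_pred l))].

Definition cyclic_code n (C : {set {ffun 'I_n -> F}}) : Prop :=
  0 \in C /\ (forall x y, x \in C -> y \in C -> x + y \in C) /\
  (forall a x, x \in C -> scaleF a x \in C) /\
  (forall x, x \in C -> cshiftF x \in C).

Definition skew_cyclic_code_R (p i n : nat) (C : {set {ffun 'I_n -> Ru}}) : Prop :=
  0 \in C /\ (forall x y, x \in C -> y \in C -> x + y \in C) /\
  (forall s y, y \in C -> scaleR s y \in C) /\
  (forall y, y \in C -> sshiftR p i y \in C).

Definition FR_skew_cyclic_code (p i alpha beta : nat)
  (C : {set {ffun 'I_alpha -> F} * {ffun 'I_beta -> Ru}}) : Prop :=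
  0 \in C /\ (forall c d, c \in C -> d \in C -> c + d \in C) /\
  (forall s c, c \in C -> (scaleF (eta s) c.1, scaleR s c.2) \in C) /\
  (forall c, c \in C -> (sshiftF p i c.1, sshiftR p i c.2) \in C).

Definition code_prod alpha beta (A : {set {ffun 'I_alpha -> F}})
  (B : {set {ffun 'I_beta -> Ru}}) : {set {ffun 'I_alpha -> F} * {ffun 'I_beta -> Ru}} :=
  [set c | (c.1 \in A) && (c.2 \in B)].

End Defs.

(* Main.v *)
Require Import Defs.
From mathcomp Require Import all_boot all_order all_algebra.
Import GRing.Theory.
Local Open Scope ring_scope.

Lemma pairD (U V : zmodType) (a c : U) (b d : V) : (a, b) + (c, d) = (a + c, b + d).
Proof. by []. Qed.

Section Aux.
Variable F : finFieldType.

Lemma Theta0 p i : prime p -> Theta p i (0 : F) = 0.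
Proof.
move=> hp; rewrite /Theta; have : (0 < p ^ i)%N by rewrite expn_gt0 prime_gt0.
by case: (p ^ i)%N => // n _; rewrite exprS mul0r.
Qed.

Lemma iterTheta0 p i n : prime p -> iter n (Theta p i) (0 : F) = 0.
Proof. by move=> hp; elim: n => //= n ->; apply: Theta0. Qed.

Lemma iertheta0 p i n : prime p -> iter n (theta p i) (0 : Ru F) = 0.
Proof.
move=> hp; elim: n => //= n ->.
by rewrite /theta /= Theta0.
Qed.

Lemma skew_mulF0 p i alpha r : prime p ->
  skew_mulF p i r (0 : {ffun 'I_alpha -> F}) = 0.
Proof.
move=> hp; apply/ffunP => l; rewrite !ffunE big1 // => j _.
by rewrite big1 // => l' _; rewrite ffunE iterTheta0 // mulr0.
Qed.

Lemma skew_mulR0 p i beta r : prime p ->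
  skew_mulR p i r (0 : {ffun 'I_beta -> Ru F}) = 0.
Proof.
move=> hp; apply/ffunP => l; rewrite !ffunE big1 // => j _.
rewrite big1 // => l' _; rewrite ffunE iertheta0 //.
by rewrite /Rmul /= !mulr0 !addr0.
Qed.

Lemma skew_mulFnil p i alpha (k : {ffun 'I_alpha -> F}) :
  skew_mulF p i [::] k = 0.
Proof. by apply/ffunP => l; rewrite !ffunE big_ord0. Qed.

Lemma skew_mulRnil p i beta (k : {ffun 'I_beta -> Ru F}) :
  skew_mulR p i [::] k = 0.
Proof. by apply/ffunP => l; rewrite !ffunE big_ord0. Qed.

Lemma iter_sshiftF p i n (x : {ffun 'I_n -> F}) k l :
  iter k (@sshiftF F p i n) x l = iter k (Theta p i) (x (iter k (@ord_pred n) l)).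
Proof.
elim: k l => //= k IH l.
by rewrite ffunE IH -iterSr.
Qed.

Lemma iter_ord_pred n (l : 'I_n) k :
  ((iter k (@ord_pred n) l) + k = l %[mod n])%N.
Proof.
elim: k => [|k IH] /=; first by rewrite addn0.
rewrite -IH; set y := iter k _ l.
have n0 : (0 < n)%N by case: n l {IH y} => [[]|].
rewrite modnDml addnS -addSn prednK ?addn_gt0 ?n0 ?orbT //.
by rewrite addnAC modnDr.
Qed.
Lemma scaleR0 n s : scaleR s (0 : {ffun 'I_n -> Ru F}) = 0.
Proof. by apply/ffunP => l; rewrite !ffunE /Rmul /= !mulr0 !addr0. Qed.

Lemma scaleF0 n a : scaleF a (0 : {ffun 'I_n -> F}) = 0.
Proof. by apply/ffunP => l; rewrite !ffunE mulr0. Qed.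

Lemma sshiftR0 p i n : prime p -> sshiftR p i (0 : {ffun 'I_n -> Ru F}) = 0.
Proof. by move=> hp; apply/ffunP => l; rewrite !ffunE /theta /= Theta0. Qed.

Lemma sshiftF0 p i n : prime p -> sshiftF p i (0 : {ffun 'I_n -> F}) = 0.
Proof. by move=> hp; apply/ffunP => l; rewrite !ffunE Theta0. Qed.

Lemma iter_mulTheta p i m q (a : F) : iter m (Theta p i) a = a ->
  (forall b : F, iter m (Theta p i) b = b) -> iter (q * m) (Theta p i) a = a.
Proof. move=> _ h; elim: q => [|q IH] //; by rewrite mulSn iterD h IH. Qed.
End Aux.

Theorem corollary1 (F : finFieldType) (p i alpha beta ordTh : nat)
  (hp : prime p) (hchar : p \in [pchar F])
  (halpha : (0 < alpha)%N) (hbeta : (0 < beta)%N)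
  (hord : is_order_Theta F p i ordTh) (hcop : coprime alpha ordTh)
  (C : {set {ffun 'I_alpha -> F} * {ffun 'I_beta -> Ru F}})
  (f : {ffun 'I_alpha -> F}) (g : {ffun 'I_beta -> Ru F})
  (hC : FR_skew_cyclic_code p i C)
  (hgen : forall c, c \in C <->
     exists r s : seq (Ru F), c = act p i r (f, 0) + act p i s (0, g)) :
  exists (C1 : {set {ffun 'I_alpha -> F}}) (C2 : {set {ffun 'I_beta -> Ru F}}),
    cyclic_code C1 /\ skew_cyclic_code_R p i C2 /\ C = code_prod C1 C2.
Proof.
case: hC => [h0 [hadd [hsc hsh]]].
exists [set x | (x, 0) \in C], [set y | (0, y) \in C].
split; [|split].
- split; first by rewrite inE.
  split.
    move=> x y; rewrite !inE => hx hy; have := hadd _ _ hx hy.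
    suff -> : (x + y, 0) = (x, 0) + (y, 0) :> ({ffun 'I_alpha -> F} * {ffun 'I_beta -> Ru F}) by [].
    by apply: injective_projections => /=; rewrite ?addr0.
  split.
    move=> a x; rewrite !inE => hx; have := hsc (a, 0) _ hx.
    by rewrite /= scaleR0.
  move=> x; rewrite !inE => hx.
  have hit : forall k, (iter k (@sshiftF F p i alpha) x, 0) \in C.
    elim => [|k IH] //=.
    by have := hsh _ IH; rewrite /= sshiftR0.
  set j := chinese alpha ordTh 1 0.
  suff -> : cshiftF x = iter j (@sshiftF F p i alpha) x by [].
  apply/ffunP => l; rewrite iter_sshiftF ffunE.
  case: hord => [m0 [hm _]].
  have hj : j = (j %/ ordTh * ordTh)%N.
    have hj0 : (j %% ordTh = 0)%N by rewrite /j chinese_modr // mod0n.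
    by rewrite {1}(divn_eq j ordTh) hj0 addn0.
  rewrite hj iter_mulTheta // -hj.
  congr (x _); apply: val_inj.
  set y := iter j _ l; set z := ord_pred l.
  change (nat_of_ord z = nat_of_ord y); rewrite -(modn_small (ltn_ord z)) -(modn_small (ltn_ord y)).
  have e1 := iter_ord_pred _ l 1%N.
  have ej := iter_ord_pred _ l j.
  rewrite /= -/z in e1; rewrite -/y in ej.
  have hj1 : (j %% alpha = 1 %% alpha)%N by rewrite /j chinese_modl.
  have L : ((z + 1 + j) %% alpha = (l + 1) %% alpha)%N.
    by rewrite -modnDml e1 modnDml -modnDmr hj1 modnDmr.
  have R : ((y + 1 + j) %% alpha = (l + 1) %% alpha)%N.
    by rewrite addnAC -modnDml ej modnDml.
  by apply/eqP; rewrite -(eqn_modDr 1%N) -(eqn_modDr j) L R.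
- split; first by rewrite inE.
  split.
    move=> x y; rewrite !inE => hx hy; have := hadd _ _ hx hy.
    by rewrite pairD addr0.
  split.
    move=> s x; rewrite !inE => hx; have := hsc s _ hx.
    by rewrite /= scaleF0.
  move=> x; rewrite !inE => hx.
  by have := hsh _ hx; rewrite /= sshiftF0.
- apply/setP => c; rewrite inE !inE; apply/idP/idP.
    case/hgen => r [s ->] /=.
    rewrite skew_mulF0 // skew_mulR0 // addr0 add0r.
    apply/andP; split; apply/hgen.
      by exists r, [::]; rewrite /act /= pairD skew_mulR0 // skew_mulRnil skew_mulF0 // !addr0.
    by exists [::], s; rewrite /act /= pairD skew_mulR0 // skew_mulFnil skew_mulF0 // addr0 add0r.
  case/andP => h1 h2; have := hadd _ _ h1 h2.
  by rewrite pairD addr0 add0r -surjective_pairing.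
Qed.
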